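(* Let $G=(V,E)$ be a finite graph with maximum vertex degree $\Delta(G)$, and let $A$ be an abelian group. If $|A|>|V|+|E|\,\Delta(G)-1$, then $G$ is $A$-cordial.
   Context: Graphs are finite, simple and undirected. For an abelian group $A$ and a graph $G=(V,E)$, a vertex labeling $\ell:V\to A$ induces an edge labeling $\ell(\{v_1,v_2\})=\ell(v_1)+\ell(v_2)$. Let $f_V(a)=|\{v\in V:\ell(v)=a\}|$ and $f_E(a)=|\{e\in E:\ell(e)=a\}|$. The labeling is $A$-cordial if $|f_V(a_1)-f_V(a_2)|\le 1$ and $|f_E(a_1)-f_E(a_2)|\le 1$ for all $a_1,a_2\in A$; $G$ is $A$-cordial if it admits an $A$-cordial labeling. *)

(* Defs.v *)
From mathcomp Require Import all_boot all_order all_algebra.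
Set Implicit Arguments. Unset Strict Implicit. Unset Printing Implicit Defensive.
Import GRing.Theory.
Local Open Scope ring_scope.

Definition simple_graph (T : finType) (e : rel T) : Prop :=
  symmetric e /\ irreflexive e.

Definition edges (T : finType) (e : rel T) : {set {set T}} :=
  [set [set x; y] | x in T, y in T & e x y].

Definition max_degree (T : finType) (e : rel T) : nat :=
  (\max_(v : T) #|[set w | e v w]|)%N.

Definition fV (T : finType) (A : finZmodType) (l : T -> A) (a : A) : nat :=
  #|[set v | l v == a]|.

(* f_E(a): number of edges {v1,v2} with l v1 + l v2 = a
   (well defined since A is abelian). *)
Definition fE (T : finType) (e : rel T) (A : finZmodType) (l : T -> A) (a : A)
  : nat :=
  #|[set E0 in edges e | [exists x, exists y,
        [&& e x y, E0 == [set x; y] & l x + l y == a]]]|.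

Definition cordial_labeling (T : finType) (e : rel T) (A : finZmodType)
  (l : T -> A) : Prop :=
  (forall a1 a2 : A, (`|(fV l a1)%:Z - (fV l a2)%:Z| <= 1)%N) /\
  (forall a1 a2 : A, (`|(fE e l a1)%:Z - (fE e l a2)%:Z| <= 1)%N).

Definition A_cordial (T : finType) (e : rel T) (A : finZmodType) : Prop :=
  exists l : T -> A, cordial_labeling e l.

(* Main.v *)
Require Import Defs.
From mathcomp Require Import all_boot all_order all_algebra.
Set Implicit Arguments. Unset Strict Implicit. Unset Printing Implicit Defensive.
Import GRing.Theory.

Section Aux.
Variables (T : finType) (e : rel T) (A : finZmodType).

Definition good (s : seq T) (l : T -> A) :=
  {in s &, injective l} /\
  forall x y z w, x \in s -> y \in s -> z \in s -> w \in s ->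
    e x y -> e z w -> (l x + l y = l z + l w)%R ->
    (x = z /\ y = w) \/ (x = w /\ y = z).

Definition sums (l : T -> A) : {set A} :=
  [set (\sum_(u in E0) l u)%R | E0 : {set T} in edges e].

Definition forb (s : seq T) (v : T) (l : T -> A) : {set A} :=
  (l @: [set x in s]) :|: [set (sm - l y)%R | sm in sums l, y in [set y | e v y]].

Lemma sum_pair (l : T -> A) x y : x != y ->
  (\sum_(u in [set x; y]) l u)%R = (l x + l y)%R.
Proof.
move=> xy; rewrite big_setU1 /= ?big_set1 //.
by rewrite in_set1.
Qed.

Lemma edge_in x y : e x y -> [set x; y] \in edges e.
Proof. by move=> exy; apply/imset2P; exists x y; rewrite ?inE. Qed.

Lemma forb_card s v l : simple_graph e -> v \notin s ->
  (#|forb s v l| <= #|T|.-1 + #|edges e| * max_degree e)%N.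
Proof.
move=> [sym irr] vs.
apply: (leq_trans (leq_card_setU _ _)); apply: leq_add.
  apply: (leq_trans (leq_imset_card _ _)).
  rewrite -(cardsC1 v); apply: subset_leq_card.
  by apply/subsetP => x; rewrite !inE => xs; apply: contraNneq vs => <-.
rewrite curry_imset2X; apply: (leq_trans (leq_imset_card _ _)).
rewrite cardsX; apply: leq_mul.
  exact: leq_imset_card.
rewrite /max_degree.
exact: (leq_bigmax_cond (F := fun v => #|[set w | e v w]|) v).
Qed.

Lemma step s v (l' : T -> A) a : simple_graph e -> v \notin s -> good s l' ->
  a \notin forb s v l' ->
  good (v :: s) (fun x => if x == v then a else l' x).
Proof.
move=> [sym irr] vs [inj H] aF.
set l := fun x => if x == v then a else l' x.
have lv : l v = a by rewrite /l eqxx.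
have lo : forall x, x \in s -> l x = l' x.
  by move=> x xs; rewrite /l; case: eqP => // xv; move: vs; rewrite -xv xs.
have av : forall y, y \in s -> a != l' y.
  move=> y ys; apply: contraNneq aF => ->; rewrite inE; apply/orP; left.
  by apply/imsetP; exists y; rewrite ?inE.
have inj' : {in v :: s &, injective l}.
  move=> x y; rewrite !in_cons => /orP[/eqP->|xs] /orP[/eqP->|ys] //.
  - by rewrite lv lo // => /eqP; rewrite (negbTE (av _ ys)).
  - by rewrite lv lo // => /esym /eqP; rewrite (negbTE (av _ xs)).
  - by rewrite !lo //; apply: inj.
have key : forall y z w, y \in v :: s -> z \in v :: s -> w \in v :: s ->
    e v y -> e z w -> (l v + l y = l z + l w)%R ->
    (v = z /\ y = w) \/ (v = w /\ y = z).
  move=> y z w; rewrite !in_cons => /orP[/eqP->|ys]; first by rewrite irr.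
  move=> zs ws evy ezw.
  case: (eqVneq z v) => [zv|zv].
    subst z; move/addrI => lyw; left; split => //.
    by apply: inj'; rewrite ?in_cons ?ys ?orbT.
  case: (eqVneq w v) => [wv|wv].
    subst w; rewrite addrC => /addIr lyz; right; split => //.
    by apply: inj'; rewrite ?in_cons ?ys ?orbT.
  move: zs ws; rewrite (negbTE zv) (negbTE wv) /= => zs ws.
  rewrite lv !lo // => Heq; exfalso; move/negP: aF; apply.
  rewrite inE; apply/orP; right.
  apply/imset2P; exists (l' z + l' w)%R y.
  - apply/imsetP; exists [set z; w]; first exact: edge_in.
    rewrite sum_pair //; apply/eqP => zw; subst w; by rewrite irr in ezw.
  - by rewrite inE.
  - by rewrite -Heq addrK.
split=> // x y z w xs ys zs ws exy ezw.
case: (eqVneq x v) => [xv|xv].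
  by subst x; apply: key.
case: (eqVneq y v) => [yv|yv].
  subst y; rewrite addrC => Hs.
  have := key x z w xs zs ws (etrans (sym _ _) exy) ezw Hs.
  by case=> [[-> ->]|[-> ->]]; [right|left].
case: (eqVneq z v) => [zv|zv].
  subst z => Hs.
  have := key w x y ws xs ys ezw exy (esym Hs).
  by case=> [[-> ->]|[-> ->]]; [left|right].
case: (eqVneq w v) => [wv|wv].
  subst w; rewrite [(l z + _)%R]addrC => Hs.
  have := key z x y zs xs ys (etrans (sym _ _) ezw) exy (esym Hs).
  by case=> [[-> ->]|[-> ->]]; [right|left].
move: xs ys zs ws; rewrite !in_cons (negbTE xv) (negbTE yv) (negbTE zv) (negbTE wv) /=.
move=> xs ys zs ws; rewrite !lo //; exact: H.
Qed.

Lemma build (s : seq T) : simple_graph e ->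
  (#|T| + #|edges e| * max_degree e - 1 < #|A|)%N ->
  exists l : T -> A, good s l.
Proof.
move=> sg hA; elim: s => [|v s [l' Hl']].
  by exists (fun _ => 0%R); split.
case: (boolP (v \in s)) => vs.
  exists l'; case: Hl' => inj H; split.
    by move=> x y; rewrite !in_cons => /orP[/eqP->|xs] /orP[/eqP->|ys]; apply: inj.
  move=> x y z w; rewrite !in_cons.
  by move=> /orP[/eqP->|xs] /orP[/eqP->|ys] /orP[/eqP->|zs] /orP[/eqP->|ws]; apply: H.
case: (pickP (fun a => a \notin forb s v l')) => [a Ha|Hn].
  by exists (fun x => if x == v then a else l' x); apply: step.
exfalso.
have : (#|[set: A]| <= #|forb s v l'|)%N.
  by apply: subset_leq_card; apply/subsetP => a _; move: (Hn a) => /negbFE.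
rewrite cardsT => h.
have := leq_trans h (forb_card l' sg vs).
have T0 : (0 < #|T|)%N by apply/card_gt0P; exists v.
rewrite leqNgt; move/negP; apply.
by apply: leq_trans hA; rewrite ltnS; rewrite -subn1 addnBAC // subn1.
Qed.

End Aux.

Theorem theorem3p2 (T : finType) (e : rel T) (A : finZmodType) :
  simple_graph e ->
  (#|T| + #|edges e| * max_degree e - 1 < #|A|)%N ->
  A_cordial e A.
Proof.
move=> sg hA.
have [l [inj H]] := build (enum T) sg hA.
exists l.
have hV : forall a, (fV l a <= 1)%N.
  move=> a; apply/card_le1_eqP => x y; rewrite !inE => /eqP <- /eqP hy.
  by apply: inj; rewrite ?mem_enum.
have hE : forall a, (fE e l a <= 1)%N.
  move=> a; apply/card_le1_eqP => E0 E1; rewrite !inE.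
  move=> /andP[_ /existsP[x /existsP[y /and3P[exy /eqP-> /eqP hxy]]]].
  move=> /andP[_ /existsP[z /existsP[w /and3P[ezw /eqP-> /eqP hzw]]]].
  have := H x y z w (mem_enum _ _) (mem_enum _ _) (mem_enum _ _) (mem_enum _ _)
    exy ezw (etrans hxy (esym hzw)).
  by case=> [[-> ->]|[-> ->]] //; rewrite setUC.
split=> a1 a2.
  move: (hV a1) (hV a2); case: (fV l a1) => [|[|?]] //; by case: (fV l a2) => [|[|?]].
move: (hE a1) (hE a2); case: (fE e l a1) => [|[|?]] //; by case: (fE e l a2) => [|[|?]].
Qed.
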